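(* Let $G$ be a graph and let $H$ be a triangle-free subgraph of $G$ such that every maximal clique of $H$ is a maximal clique of $G$. Then $p(G) \ge p(H)$.
   Context: All graphs are finite and simple. For an acyclic digraph $D$, the phylogeny graph $P(D)$ is the graph on $V(D)$ in which distinct vertices $u,v$ are adjacent if and only if $(u,v)\in A(D)$, or $(v,u)\in A(D)$, or there is a vertex $w$ with $(u,w),(v,w)\in A(D)$. A phylogeny digraph for a graph $G$ is an acyclic digraph $D$ such that $G$ is an induced subgraph of $P(D)$ and $D$ has no arc from a vertex of $V(D)\setminus V(G)$ to a vertex of $V(G)$. The phylogeny number $p(G)$ is the minimum of $|V(D)\setminus V(G)|$ over all phylogeny digraphs $D$ for $G$. *)

(* Defs.v *)
From Stdlib Require Import ClassicalEpsilon.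
From mathcomp Require Import all_boot.
Set Implicit Arguments. Unset Strict Implicit. Unset Printing Implicit Defensive.

Definition simple_graph (V : finType) (e : rel V) : Prop :=
  symmetric e /\ irreflexive e.

Definition is_clique (V : finType) (e : rel V) (K : {set V}) : bool :=
  [forall x in K, forall y in K, (x != y) ==> e x y].

Definition maximal_clique (V : finType) (e : rel V) (K : {set V}) : bool :=
  maxset (is_clique e) K.

Definition triangle_free (V : finType) (e : rel V) : Prop :=
  forall x y z : V, ~ [&& e x y, e y z & e x z].

Definition arc (T : finType) (a : {ffun T * T -> bool}) : rel T :=
  fun u v => a (u, v).

Definition acyclic (T : finType) (a : {ffun T * T -> bool}) : bool :=
  [forall x, forall y, arc a x y ==> ~~ connect (arc a) y x].

Definition phylo_adj (T : finType) (a : {ffun T * T -> bool}) (u v : T) : bool :=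
  (u != v) && [|| arc a u v, arc a v u | [exists w, arc a u w && arc a v w]].

(* D, on vertex set V(G) + {k new vertices} (= V + 'I_k, V(G) embedded by inl),
   is a phylogeny digraph for G = (V,e). *)
Definition is_phylogeny_digraph (V : finType) (e : rel V) (k : nat)
    (a : {ffun (V + 'I_k)%type * (V + 'I_k)%type -> bool}) : bool :=
  [&& acyclic a,
 [forall u : V, forall v : V, phylo_adj a (inl u) (inl v) == e u v]
    & [forall i : 'I_k, forall u : V, ~~ arc a (inr i) (inl u)]].

Definition has_phylogeny_digraph (V : finType) (e : rel V) (k : nat) : bool :=
  [exists a : {ffun (V + 'I_k)%type * (V + 'I_k)%type -> bool},
     @is_phylogeny_digraph V e k a].

(* p(G): the least k such that G has a phylogeny digraph with k new vertices
   (such a k always exists for a simple graph; the 0 branch is never used then). *)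
Definition phylogeny_number (V : finType) (e : rel V) : nat :=
  match excluded_middle_informative (exists k, has_phylogeny_digraph e k) with
  | left h => ex_minn h
  | right _ => 0
  end.

(* Main.v *)
Require Import Defs.
From Stdlib Require Import ClassicalEpsilon.
From mathcomp Require Import all_boot.
Set Implicit Arguments. Unset Strict Implicit.

Lemma connect_map (T1 T2 : finType) (e1 : rel T1) (e2 : rel T2) (phi : T1 -> T2) :
  (forall x y, e1 x y -> e2 (phi x) (phi y)) ->
  forall x y, connect e1 x y -> connect e2 (phi x) (phi y).
Proof.
move=> He x y /connectP [p Hp ->].
elim: p x Hp => [|z p IH] x /=; first by rewrite connect0.
case/andP=> Hxz Hp; apply: connect_trans (IH _ Hp).
by apply: connect1; apply: He.
Qed.

Lemma clique2 (V : finType) (e : rel V) (x y : V) :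
  symmetric e -> e x y -> is_clique e [set x; y].
Proof.
move=> Hs Hxy; apply/forallP=> a; apply/implyP=> Ha; apply/forallP=> b;
apply/implyP=> Hb; apply/implyP=> nab.
move: Ha Hb nab; rewrite !inE => /orP[]/eqP-> /orP[]/eqP->; rewrite ?eqxx //.
by rewrite Hs.
Qed.

Lemma clique3 (V : finType) (e : rel V) (x y v : V) :
  symmetric e -> e x y -> e x v -> e y v -> is_clique e (v |: [set x; y]).
Proof.
move=> Hs Hxy Hxv Hyv; apply/forallP=> a; apply/implyP=> Ha; apply/forallP=> b;
apply/implyP=> Hb; apply/implyP=> nab.
move: Ha Hb nab; rewrite !inE => /or3P[]/eqP-> /or3P[]/eqP->; rewrite ?eqxx //;
  by rewrite // Hs.
Qed.

Lemma edge_max (W : finType) (h : rel W) (x y : W) :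
  simple_graph h -> triangle_free h -> h x y -> maximal_clique h [set x; y].
Proof.
move=> [Hs Hi] Htf Hxy; apply/maxsetP; split; first exact: clique2.
move=> B HB Hsub; apply/eqP; rewrite eqEsubset Hsub andbT.
apply/subsetP=> z Hz; rewrite !inE; apply/negPn/negP; rewrite negb_or => /andP[nzx nzy].
have Hx : x \in B by apply: (subsetP Hsub); rewrite !inE eqxx.
have Hy : y \in B by apply: (subsetP Hsub); rewrite !inE eqxx orbT.
have cl : forall a b, a \in B -> b \in B -> a != b -> h a b.
  move=> a b Ha Hb nab; move/forallP: HB => /(_ a); rewrite Ha /= => /forallP/(_ b).
  by rewrite Hb nab.
apply: (Htf x y z); rewrite Hxy !cl //; by rewrite eq_sym.
Qed.

Section Main.
Variables (V W : finType) (g : rel V) (h : rel W) (f : W -> V).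
Hypotheses (HG : simple_graph g) (HH : simple_graph h) (f_inj : injective f)
  (f_sub : forall x y : W, h x y -> g (f x) (f y)) (Htf : triangle_free h)
  (Hcl : forall K : {set W}, maximal_clique h K -> maximal_clique g (f @: K)).

Lemma L3 x y v : h x y -> g (f x) v -> g (f y) v -> False.
Proof.
move=> Hxy Hxv Hyv.
have := Hcl (edge_max HH Htf Hxy); rewrite imsetU1 imset_set1 => /maxsetP [_ Hm].
case: HG => Hs Hi.
have := Hm _ (clique3 Hs (f_sub Hxy) Hxv Hyv) (subsetUr _ _).
move=> E; have : v \in v |: [set f x; f y] by rewrite !inE eqxx.
rewrite E !inE => /orP[]/eqP Ev.
- by move: Hxv; rewrite -Ev Hi.
- by move: Hyv; rewrite -Ev Hi.
Qed.

Variable k : nat.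
Variable a : {ffun (V + 'I_k)%type * (V + 'I_k)%type -> bool}.
Hypothesis PD : is_phylogeny_digraph g a.

Lemma acyc_noloop z : ~~ Defs.arc a z z.
Proof.
case/and3P: PD => /forallP/(_ z)/forallP/(_ z) Hac _ _.
by apply/negP=> Hz; move: Hac; rewrite Hz connect0.
Qed.

Lemma padj u v : phylo_adj a (inl u) (inl v) = g u v.
Proof. by case/and3P: PD => _ /forallP/(_ u)/forallP/(_ v)/eqP. Qed.

Lemma adj_arc u v : Defs.arc a (inl u) (inl v) -> g u v.
Proof.
move=> Ha; rewrite -padj /phylo_adj Ha /= andbT.
have [E|//] := eqVneq (inl u : (V + 'I_k)%type) (inl v).
by move: Ha; rewrite E (negbTE (acyc_noloop _)).
Qed.

Lemma adj_common u v z : u != v -> Defs.arc a (inl u) z -> Defs.arc a (inl v) z -> g u v.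
Proof.
move=> nuv Hu Hv; rewrite -padj /phylo_adj.
have -> : (inl u != inl v :> (V + 'I_k)%type) by apply: contra nuv => /eqP [->].
by apply/orP; right; apply/orP; right; apply/existsP; exists z; rewrite Hu Hv.
Qed.

Definition a' : {ffun (W + 'I_k)%type * (W + 'I_k)%type -> bool} :=
  [ffun p => match p with
   | (inl x, inl y) => h x y && a (inl (f x), inl (f y))
   | (inl x, inr w) => a (inl (f x), inr w) &&
        [forall x' : W, a (inl (f x'), inr w) ==> (x' == x) || h x x']
   | _ => false end].

Definition phi (s : (W + 'I_k)%type) : (V + 'I_k)%type :=
  match s with inl x => inl (f x) | inr w => inr w end.

Lemma arc_phi s t : Defs.arc a' s t -> Defs.arc a (phi s) (phi t).
Proof.
rewrite /Defs.arc ffunE; case: s => [x|w]; case: t => [y|w'] //=.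
- by case/andP.
- by case/andP.
Qed.

Lemma arc'_inr x y w : h x y -> Defs.arc a (inl (f x)) (inr w) ->
  Defs.arc a (inl (f y)) (inr w) -> Defs.arc a' (inl x) (inr w).
Proof.
move=> Hxy Hx Hy; rewrite /Defs.arc ffunE /=; rewrite /Defs.arc in Hx; rewrite Hx /=.
apply/forallP=> x'; apply/implyP=> Hx'.
have [->|nx] := eqVneq x' x; first by rewrite ?eqxx.
have [->|ny] := eqVneq x' y; first by rewrite ?Hxy ?orbT.
exfalso; apply: (L3 (v := f x') Hxy).
- by apply: (adj_common (z := inr w)) => //; apply: contra nx => /eqP/f_inj ->.
- by apply: (adj_common (z := inr w)) => //; apply: contra ny => /eqP/f_inj ->.
Qed.

Lemma a'_phylo : is_phylogeny_digraph h a'.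
Proof.
case: HH => Hs Hi.
apply/and3P; split.
- apply/forallP=> x; apply/forallP=> y; apply/implyP=> Hxy; apply/negP=> Hc.
  have := connect_map arc_phi Hc; have := arc_phi Hxy.
  case/and3P: PD => /forallP/(_ (phi x))/forallP/(_ (phi y)) Hac _ _.
  by move=> H1 H2; move: Hac; rewrite H1 H2.
- apply/forallP=> x; apply/forallP=> y; apply/eqP; apply/idP/idP.
  + case/andP=> nxy; case/or3P.
    * by rewrite /Defs.arc ffunE /= => /andP [].
    * by rewrite /Defs.arc ffunE /= => /andP [] ; rewrite Hs.
    * case/existsP=> [[z|w]]; rewrite /Defs.arc !ffunE /=.
      - case/andP=> /andP [Hxz Hxz'] /andP [Hyz Hyz'].
        exfalso; apply: (L3 (v := f y) Hxz).
        + apply: (adj_common (z := inl (f z))) => //.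
          by apply: contra nxy => /eqP/f_inj ->.
        + case: HG => Hgs _; rewrite Hgs; exact: adj_arc.
      - case/andP=> /andP [Hxw _] /andP [Hyw /forallP/(_ x)].
        have nxy' : x != y by apply: contra nxy => /eqP ->.
        move=> /implyP/(_ Hxw)/orP[/eqP E|]; last by rewrite Hs.
        by move: nxy'; rewrite E eqxx.
  + move=> Hxy.
    have nxy : inl x != inl y :> (W + 'I_k)%type.
      by apply/negP=> /eqP [E]; move: Hxy; rewrite E Hi.
    rewrite /phylo_adj nxy /=.
    have := f_sub Hxy; rewrite -padj /phylo_adj => /andP [_] /or3P [].
    * by move=> H; rewrite /Defs.arc ffunE /= Hxy; rewrite /Defs.arc in H; rewrite H.
    * by move=> H; apply/orP; right; apply/orP; left; rewrite /Defs.arc ffunE /= Hs Hxy; rewrite /Defs.arc in H; rewrite H ?orbT.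
    * case/existsP=> [[v|w]] /andP [H1 H2].
      - exfalso; apply: (L3 (v := v) Hxy); exact: adj_arc.
      - apply/orP; right; apply/orP; right; apply/existsP; exists (inr w).
        rewrite (arc'_inr Hxy H1 H2) /=.
        by apply: (arc'_inr _ H2 H1); rewrite Hs.
- by apply/forallP=> i; apply/forallP=> u; rewrite /Defs.arc ffunE.
Qed.

End Main.

Lemma exists_phylo (V : finType) (g : rel V) : simple_graph g ->
  has_phylogeny_digraph g #|{: V * V}|.
Proof.
move=> [Hs Hi]; apply/existsP.
pose k := #|{: V * V}|.
exists [ffun p : (V + 'I_k)%type * (V + 'I_k)%type => match p with
  | (inl u, inr i) => let q := enum_val i in g q.1 q.2 && ((u == q.1) || (u == q.2))
  | _ => false end].
apply/and3P; split.
- apply/forallP=> x; apply/forallP=> y; apply/implyP.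
  rewrite /Defs.arc ffunE; case: x => [u|i] //; case: y => [v|j] //= _.
  apply/negP=> /connectP [p Hp E]; case: p Hp E => [|z p] /=.
  + by [].
  + by rewrite /Defs.arc ffunE.
- apply/forallP=> u; apply/forallP=> v; apply/eqP; apply/idP/idP.
  + case/andP=> nuv /or3P []; rewrite /Defs.arc ?ffunE //.
    case/existsP=> [[z|i]]; rewrite /Defs.arc !ffunE //=.
    case/andP=> /andP [Hq Hu] /andP [_ Hv].
    have nuv' : u != v by apply: contra nuv => /eqP ->.
    move: Hu Hv nuv'; case/orP=> /eqP-> /orP[]/eqP->; rewrite ?eqxx //.
    by rewrite Hs.
  + move=> Huv; rewrite /phylo_adj.
    have -> : inl u != inl v :> (V + 'I_k)%type.
      by apply/negP=> /eqP [E]; move: Huv; rewrite E Hi.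
    apply/orP; right; apply/orP; right; apply/existsP; exists (inr (enum_rank (u, v))).
    by rewrite /Defs.arc !ffunE /= enum_rankK /= Huv !eqxx orbT.
- by apply/forallP=> i; apply/forallP=> u; rewrite /Defs.arc ffunE.
Qed.

Theorem mainTheorem3 (V W : finType) (g : rel V) (h : rel W) (f : W -> V)
  (HG : simple_graph g) (HH : simple_graph h)
  (f_inj : injective f)
  (f_sub : forall x y : W, h x y -> g (f x) (f y))
  (Htf : triangle_free h)
  (Hcl : forall K : {set W}, maximal_clique h K -> maximal_clique g (f @: K)) :
  phylogeny_number h <= phylogeny_number g.
Proof.
have trans : forall k, has_phylogeny_digraph g k -> has_phylogeny_digraph h k.
  move=> k /existsP [a Ha]; apply/existsP; exists (@a' V W h f k a).
  exact: (a'_phylo HG HH f_inj f_sub Htf Hcl Ha).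
rewrite /phylogeny_number.
case: excluded_middle_informative => [hh|nh]; last by [].
case: excluded_middle_informative => [hg|ng].
- case: ex_minnP => m Hm Hmin; case: ex_minnP => m' Hm' Hmin'.
  by apply: Hmin; apply: trans.
- by exfalso; apply: ng; exists #|{: V * V}|; apply: exists_phylo.
Qed.
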